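(* In the worst case, no algorithm that uses only one disk, accessed by sequential passes, can compute the Burrows–Wheeler transform of a text of length $n$ when the product of the size of its internal memory in bits and its number of passes is $o(n)$; likewise, no such algorithm can invert the Burrows–Wheeler transform (recover $T$ from $\mathrm{bwt}(T)$) when this product is $o(n)$.
   Context: Model: a machine with an internal memory of a given number of bits and a single disk; the input initially resides on the disk, the output must eventually reside on the disk, and the disk is accessed only by sequential passes (scans). For a text $T[1,n]$ over a finite ordered alphabet with a unique smallest terminating character $T[n]$, the suffix array $\mathrm{sa}[1,n]$ lists starting positions of the suffixes of $T$ in lexicographic order, and $\mathrm{bwt}(T)[i] = T[\mathrm{sa}[i]-1]$ if $\mathrm{sa}[i]>1$, $\mathrm{bwt}(T)[i]=T[n]$ if $\mathrm{sa}[i]=1$. ''In the worst case'' means: for any such algorithm whose (memory size in bits) $\times$ (number of passes) is $o(n)$, there are inputs of length $n$ (for infinitely many $n$) on which it does not produce the correct output. *)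

(* Defs.v *)
From mathcomp Require Import all_boot all_order.
Set Implicit Arguments. Unset Strict Implicit. Unset Printing Implicit Defensive.
Import Order.TTheory.

(* Positions are 1-based as in the paper: T[i] = nth _ T (i-1).          *)
Section Text.
Variables (disp : Order.disp_t) (Sig : finOrderType disp).

Fixpoint lexlt (s t : seq Sig) : bool :=
  match s, t with
  | [::], [::] => false
  | [::], _ :: _ => true
  | _ :: _, [::] => false
  | x :: s', y :: t' => (x < y)%O || ((x == y) && lexlt s' t')
  end.

Definition lexle (s t : seq Sig) : bool := (s == t) || lexlt s t.

Definition valid_text (T : seq Sig) : Prop :=
  0 < size T /\
  forall x0 : Sig, forall i, i < (size T).-1 -> (last x0 T < nth x0 T i)%O.

Definition suffix (T : seq Sig) (i : nat) : seq Sig := drop i.-1 T.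

Definition suffix_array (T : seq Sig) : seq nat :=
  sort (fun i j => lexle (suffix T i) (suffix T j)) (iota 1 (size T)).

Definition bwt (T : seq Sig) : seq Sig :=
  match T with
  | [::] => [::]
  | x0 :: _ =>
      [seq (if 1 < i then nth x0 T (i.-1).-1 else last x0 T) | i <- suffix_array T]
  end.

End Text.

(* Machine model: internal memory of m bits (state = m.-tuple bool),    *)
(* one disk (a sequence over a finite disk alphabet) accessed only by    *)
(* sequential left-to-right passes.  During a pass the machine reads the *)
(* cells one after another; on reading a cell it updates its memory and  *)
(* replaces the cell by an arbitrary (possibly empty) word, and at the   *)
(* end of the pass it may update its memory and append a word.  Memory   *)
(* persists between passes.  Input and output are encoded cell-wise on   *)
(* the disk through an injective encoding of the text alphabet.         *)
Record machine (Sig : finType) (m : nat) := Machine {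
  disk_alph : finType;
  enc : Sig -> disk_alph;
  enc_inj : injective enc;
  init : m.-tuple bool;
  step : m.-tuple bool -> disk_alph -> m.-tuple bool * seq disk_alph;
  finish : m.-tuple bool -> m.-tuple bool * seq disk_alph
}.

Section Run.
Variables (Sig : finType) (m : nat) (M : machine Sig m).

Fixpoint scan (q : m.-tuple bool) (d : seq (disk_alph M))
  : m.-tuple bool * seq (disk_alph M) :=
  match d with
  | [::] => (q, [::])
  | x :: d' =>
      let (q1, w) := @step _ _ M q x in
      let (q2, w') := scan q1 d' in (q2, w ++ w')
  end.

Definition pass (c : m.-tuple bool * seq (disk_alph M))
  : m.-tuple bool * seq (disk_alph M) :=
  let (q1, d1) := scan c.1 c.2 in
  let (q2, w) := @finish _ _ M q1 in (q2, d1 ++ w).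

Definition disk_after (p : nat) (x : seq Sig) : seq (disk_alph M) :=
  (iter p pass (@init _ _ M, map (@enc _ _ M) x)).2.

Definition outputs (p : nat) (x y : seq Sig) : Prop :=
  disk_after p x = map (@enc _ _ M) y.

End Run.

Definition little_o_n (f : nat -> nat) : Prop :=
  forall c, 0 < c -> exists N, forall n, N <= n -> c * f n <= n.

(* Main.v *)
Require Import Defs.
From mathcomp Require Import all_boot all_order zify.
Set Implicit Arguments. Unset Strict Implicit. Unset Printing Implicit Defensive.
Import Order.TTheory.

Section Lex.
Variables (disp : Order.disp_t) (Sig : finOrderType disp).
Implicit Types s t u : seq Sig.

Lemma lexlt_cons (x y : Sig) s t :
  lexlt (x :: s) (y :: t) = (x < y)%O || ((x == y) && lexlt s t).
Proof. by []. Qed.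

Lemma lexlt_irr s : lexlt s s = false.
Proof. by elim: s => //= x s ->; rewrite ltxx eqxx. Qed.

Lemma lexlt_trans s t u : lexlt s t -> lexlt t u -> lexlt s u.
Proof.
elim: s t u => [|x s IH] [|y t] [|z u] //=.
case/orP=> [lxy|/andP[/eqP <- st]]; case/orP=> [lyz|/andP[/eqP <- tu]].
- by rewrite (lt_trans lxy lyz).
- by rewrite lxy.
- by rewrite lyz.
- by rewrite eqxx (IH _ _ st tu) orbT.
Qed.

Lemma lexlt_asym s t : lexlt s t -> lexlt t s = false.
Proof. by move=> st; apply/negP => ts; have := lexlt_trans st ts; rewrite lexlt_irr. Qed.

Lemma lexlt_total s t : s != t -> lexlt s t || lexlt t s.
Proof.
elim: s t => [|x s IH] [|y t] //=.
rewrite eqseq_cons negb_and => H.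
case: (ltgtP x y) => //= exy; subst y.
rewrite eqxx /= in H; exact: IH.
Qed.

Lemma lexle_trans : transitive (@lexle _ Sig).
Proof.
move=> t s u; rewrite /lexle => /orP[/eqP->|st] // /orP[/eqP<-|tu].
  by rewrite st orbT.
by rewrite (lexlt_trans st tu) orbT.
Qed.

Lemma lexle_lt s t : lexle s t -> s != t -> lexlt s t.
Proof. rewrite /lexle => /orP[/eqP->|//]; by rewrite eqxx. Qed.

Lemma lexle_nlt s t : lexle s t -> lexlt t s = false.
Proof. by rewrite /lexle => /orP[/eqP->|/lexlt_asym]//; rewrite lexlt_irr. Qed.

End Lex.

Section Rank.
Variables (disp : Order.disp_t) (Sig : finOrderType disp).
Variable key : nat -> seq Sig.

Definition kle := fun i j => lexle (key i) (key j).

Lemma kle_total : total kle.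
Proof.
move=> i j; rewrite /kle /lexle.
case: (eqVneq (key i) (key j)) => [->|ne]; first by [].
by rewrite /=; exact: lexlt_total.
Qed.

Lemma kle_trans : transitive kle.
Proof. by move=> i j k; rewrite /kle; exact: lexle_trans. Qed.

Lemma count_lt_index (s : seq nat) q :
  sorted kle s -> {in s &, injective key} -> q \in s ->
  count (fun j => lexlt (key j) (key q)) s = index q s.
Proof.
elim: s => [|h s IH] //= srt inj qin.
have srt' : sorted kle s by exact: (path_sorted srt).
have allh := order_path_min kle_trans srt.
have inj' : {in s &, injective key}.
  by move=> i j hi hj; apply: inj; rewrite inE ?hi ?hj orbT.
case: (eqVneq h q) => [<-|nhq].
  rewrite lexlt_irr add0n; apply/eqP; rewrite -leqn0 leqNgt -has_count; apply/hasPn.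
  move=> j js; move/allP: allh => /(_ j js); rewrite /kle => /lexle_nlt ->; done.
rewrite inE eq_sym (negbTE nhq) /= in qin.
rewrite IH //.
move/allP: allh => /(_ q qin); rewrite /kle => hle.
rewrite lexle_lt //.
apply/negP => /eqP ek; move/eqP: nhq; apply; apply: inj => //.
  by rewrite inE eqxx. by rewrite inE qin orbT.
Qed.

End Rank.

Section Rank2.
Variables (disp : Order.disp_t) (Sig : finOrderType disp).
Variable key : nat -> seq Sig.

Lemma filter_lt_take (s : seq nat) q :
  sorted (kle key) s -> {in s &, injective key} -> q \in s ->
  filter (fun j => lexlt (key j) (key q)) s = take (index q s) s.
Proof.
elim: s => [|h s IH] //= srt inj qin.
have srt' : sorted (kle key) s by exact: (path_sorted srt).
have allh := order_path_min (@kle_trans _ _ key) srt.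
have inj' : {in s &, injective key}.
  by move=> i j hi hj; apply: inj; rewrite inE ?hi ?hj orbT.
case: (eqVneq h q) => [<-|nhq].
  rewrite lexlt_irr /=; apply/eqP; rewrite -(negbK (_ == _)) -has_filter.
  apply/negP => /hasP [j js]; move/allP: allh => /(_ j js).
  by rewrite /kle => /lexle_nlt ->.
rewrite inE eq_sym (negbTE nhq) /= in qin.
rewrite IH //.
move/allP: allh => /(_ q qin); rewrite /kle => hle.
rewrite lexle_lt //.
apply/negP => /eqP ek; move/eqP: nhq; apply; apply: inj => //.
  by rewrite inE eqxx. by rewrite inE qin orbT.
Qed.
End Rank2.

Section BwtRank.
Variables (disp : Order.disp_t) (Sig : finOrderType disp).
Variable T : seq Sig.
Local Notation n := (size T).
Local Notation SS := (Defs.suffix T).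
Local Notation sa := (suffix_array T).

Definition rank q := count (fun j => lexlt (Defs.suffix T j) (Defs.suffix T q)) (iota 1 n).

Lemma size_suffix i : 0 < i -> size (SS i) = n - i.-1.
Proof. by move=> _; rewrite /Defs.suffix size_drop. Qed.

Lemma S_inj : {in iota 1 n &, injective SS}.
Proof.
move=> i j; rewrite !mem_iota => /andP[i1 i2] /andP[j1 j2] e.
have := congr1 size e; rewrite !size_suffix // => e2.
move: i1 i2 j1 j2 e2; clear e; case: i => // i; case: j => // j _ + _ + /=.
move=> ? ? ?; apply/eqP; rewrite eqSS; apply/eqP. lia.
Qed.

Lemma sa_sorted : sorted (kle SS) sa.
Proof. exact: (sort_sorted (@kle_total _ _ SS)). Qed.

Lemma sa_perm : perm_eq sa (iota 1 n).
Proof. by rewrite /suffix_array perm_sort. Qed.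

Lemma mem_sa q : (q \in sa) = (q \in iota 1 n).
Proof. by rewrite /suffix_array mem_sort. Qed.

Lemma size_sa : size sa = n.
Proof. by rewrite (perm_size sa_perm) size_iota. Qed.

Lemma sa_inj : {in sa &, injective SS}.
Proof. by move=> i j; rewrite !mem_sa; exact: S_inj. Qed.

Lemma rank_index q : q \in iota 1 n -> rank q = index q sa.
Proof.
move=> qi; rewrite /rank -(permP sa_perm).
apply: count_lt_index; [exact: sa_sorted|exact: sa_inj|by rewrite mem_sa].
Qed.

Lemma nth_sa_rank q : q \in iota 1 n -> nth 0 sa (rank q) = q.
Proof. by move=> qi; rewrite rank_index // nth_index // mem_sa. Qed.

Lemma rank_lt q : q \in iota 1 n -> rank q < n.
Proof. by move=> qi; rewrite rank_index // -size_sa index_mem mem_sa. Qed.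

Lemma nth_sa_mem r : r < n -> nth 0 sa r \in iota 1 n.
Proof. by move=> rn; rewrite -mem_sa mem_nth // size_sa. Qed.

Lemma rank_nth_sa r : r < n -> rank (nth 0 sa r) = r.
Proof.
move=> rn; rewrite rank_index ?nth_sa_mem // index_uniq //.
  by rewrite size_sa.
by rewrite /suffix_array sort_uniq iota_uniq.
Qed.

Lemma rank_inj q q' : q \in iota 1 n -> q' \in iota 1 n -> rank q = rank q' -> q = q'.
Proof. by move=> qi q'i e; rewrite -(nth_sa_rank qi) e nth_sa_rank. Qed.

Lemma take_sa_rank q : q \in iota 1 n ->
  take (rank q) sa = filter (fun j => lexlt (SS j) (SS q)) sa.
Proof.
move=> qi; rewrite rank_index // (filter_lt_take sa_sorted sa_inj) // mem_sa //.
Qed.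

Definition cb (z : Sig) i := if 1 < i then nth z T (i.-1).-1 else last z T.

Lemma size_bwt : size (bwt T) = n.
Proof. by rewrite /bwt; case E: T => // [? ?]; rewrite -E size_map size_sa. Qed.

Lemma bwt_map z : bwt T = map (cb z) sa.
Proof.
have [E|[t0 [T' E]]] : T = [::] \/ exists t0 T', T = t0 :: T'.
  by case: T; [left|right; do 2 eexists].
  by rewrite /bwt /suffix_array E.
rewrite /bwt {1}E.
apply/eq_in_map => i; rewrite mem_sa mem_iota => /andP[_ i2].
rewrite /cb; case: ifP => // i1; last by rewrite E.
apply: set_nth_default. move: i1 i2; case: i => // [[|i]] //= _. lia.
Qed.

Lemma nth_bwt z r : r < n -> nth z (bwt T) r = cb z (nth 0 sa r).
Proof.
move=> rn; rewrite (bwt_map z) (nth_map 0) // size_sa //.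
Qed.

Lemma cb_rank z q : q \in iota 1 n -> nth z (bwt T) (rank q) = cb z q.
Proof. by move=> qi; rewrite nth_bwt ?rank_lt // nth_sa_rank. Qed.

End BwtRank.

Lemma rank_succ (disp : Order.disp_t) (Sig : finOrderType disp) (T : seq Sig) q :
  rank T q.+1 = count (fun i => lexlt (drop i T) (drop q T)) (iota 0 (size T)).
Proof. by rewrite /rank (iotaDl 1 0) count_map. Qed.

Lemma count_excl (A : Type) (P Q : pred A) s :
  (forall x, P x -> Q x = false) ->
  count (fun x => P x || Q x) s = count P s + count Q s.
Proof.
move=> H; elim: s => //= x s ->.
case Px: (P x); first by rewrite (H _ Px) /=; lia.
by case: (Q x) => /=; lia.
Qed.

Lemma iota_last m k : iota m k.+1 = iota m k ++ [:: m + k].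
Proof. by rewrite -addn1 iotaD. Qed.

Lemma iota_shift m k : iota m.+1 k = map succn (iota m k).
Proof. by rewrite -add1n iotaDl. Qed.

Section Inj.
Variables (disp : Order.disp_t) (Sig : finOrderType disp).
Variable T : seq Sig.
Hypothesis vT : valid_text T.
Local Notation n := (size T).
Local Notation SS := (Defs.suffix T).
Variable z : Sig.

Lemma n_gt0 : 0 < n. Proof. by case: vT. Qed.

Lemma lastT_lt i : i < n.-1 -> (last z T < nth z T i)%O.
Proof. by case: vT => _ H; exact: H. Qed.

Lemma suff_n : SS n = [:: last z T].
Proof.
rewrite /Defs.suffix; have := n_gt0; case/lastP: T => // s x _.
by rewrite size_rcons /= -cats1 drop_size_cat // cats1 last_rcons.
Qed.

Lemma suff_cons j : 0 < j -> j < n -> SS j = nth z T j.-1 :: SS j.+1.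
Proof.
move=> j0 jn; rewrite /Defs.suffix (drop_nth z); last by lia.
by rewrite prednK.
Qed.

Lemma iota1n : iota 1 n = iota 1 n.-1 ++ [:: n].
Proof. by rewrite -{1}(prednK n_gt0) iota_last add1n prednK // n_gt0. Qed.

Lemma rank_n : rank T n = 0.
Proof.
rewrite /rank; apply/eqP; rewrite -leqn0 leqNgt -has_count; apply/hasPn => j.
rewrite mem_iota => /andP[j1 j2]; rewrite suff_n.
case: (ltngtP j n) => [jn||]; last by move=> ->; rewrite suff_n lexlt_irr.
  rewrite suff_cons //= negb_or negb_and; apply/andP; split.
    by rewrite -leNgt le_eqVlt (lastT_lt) ?orbT //; lia.
  by rewrite eq_sym lt_eqF ?lastT_lt //; lia.
by lia.
Qed.

Lemma T_iota : map (fun j => nth z T j.-1) (iota 1 n) = T.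
Proof.
rewrite iota_shift -map_comp /=.
by apply: (@eq_from_nth _ z); rewrite size_map size_iota // => i ilt; rewrite (nth_map 0) ?size_iota // nth_iota.
Qed.

Lemma LF q : 1 < q -> q <= n ->
  rank T q.-1 = count (fun e => (e < nth z T q.-2)%O) T
              + count (pred1 (nth z T q.-2)) (take (rank T q) (bwt T)).
Proof.
move=> q1 qn; set c := nth z T q.-2.
have lc : (last z T < c)%O by apply: lastT_lt; lia.
have Sq : SS q.-1 = c :: SS q by rewrite suff_cons ?prednK //; lia.
rewrite [in LHS]/rank Sq [in LHS]iota1n count_cat /= suff_n /= lc /=.
have -> : count (fun j => lexlt (SS j) (c :: SS q)) (iota 1 n.-1) =
   count (fun j => (nth z T j.-1 < c)%O || ((nth z T j.-1 == c) && lexlt (SS j.+1) (SS q))) (iota 1 n.-1).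
  apply: eq_in_count => j; rewrite mem_iota => /andP[j1 j2].
  by rewrite suff_cons //; lia.
rewrite count_excl; last by move=> e /lt_eqF ->.
have -> : count (fun e => (e < c)%O) T = count (fun j => (nth z T j.-1 < c)%O) (iota 1 n.-1) + 1.
  rewrite -{1}T_iota count_map iota1n count_cat /= nth_last lc.
  by rewrite -{2}(prednK n_gt0) /= addn0.
rewrite addn0 -!addnA; congr (_ + _); rewrite addnC; congr (_ + _).
rewrite (bwt_map T z) -map_take take_sa_rank; last by rewrite mem_iota; lia.
rewrite count_map count_filter (permP (sa_perm T)).
have -> : iota 1 n = 1 :: map succn (iota 1 n.-1).
  by rewrite -iota_shift -{1}(prednK n_gt0).
rewrite /=.
have -> : ((cb T z 1 == c) && lexlt (SS 1) (SS q)) = false.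
  by rewrite /cb /= lt_eqF.
rewrite add0n count_map; apply: eq_in_count => j; rewrite mem_iota => /andP[j1 j2] /=.
rewrite /cb /=; case: j j1 j2 => //= j _ _.
Qed.

Lemma perm_bwt : perm_eq (bwt T) T.
Proof.
rewrite (bwt_map T z) (perm_trans (perm_map _ (sa_perm T))) //.
rewrite -{1}(prednK n_gt0) iota_shift /= {1}/cb /=.
rewrite -map_comp.
have -> : [seq (cb T z \o succn) i | i <- iota 1 n.-1] = take n.-1 T.
  apply: (@eq_from_nth _ z); first by rewrite size_map size_iota size_take; case: ifP => //; lia.
  move=> i; rewrite size_map size_iota => ilt.
  rewrite (nth_map 0) ?size_iota // nth_iota // nth_take // /cb /=.
have <- : rot n.-1 T = last z T :: take n.-1 T.
  by rewrite /rot; have := suff_n; rewrite /Defs.suffix => ->.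
by rewrite perm_rot.
Qed.

End Inj.

Lemma bwt_inj (disp : Order.disp_t) (Sig : finOrderType disp) (T T' : seq Sig) :
  valid_text T -> valid_text T' -> bwt T = bwt T' -> T = T'.
Proof.
move=> vT vT' E.
have sz : size T = size T' by rewrite -(size_bwt T) E size_bwt.
have n0 := n_gt0 vT.
have [z _] : exists z : Sig, True.
  by move: n0; case: (T) => // x _ _; exists x.
have R : forall t, t < size T -> rank T (size T - t) = rank T' (size T - t).
  elim=> [|t IH] tn; first by rewrite !subn0 rank_n // sz rank_n.
  have q1 : 1 < size T - t by lia.
  have -> : size T - t.+1 = (size T - t).-1 by lia.
  rewrite (LF vT z q1) ?leq_subr // {2}sz (LF vT' z) -?sz ?leq_subr //.
  have e1 : nth z T (size T - t).-2 = nth z (bwt T) (rank T (size T - t)).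
    by rewrite cb_rank ?mem_iota /cb; [rewrite q1|lia].
  have e2 : nth z T' (size T - t).-2 = nth z (bwt T') (rank T' (size T - t)).
    by rewrite cb_rank ?mem_iota -?sz /cb; [rewrite q1|lia].
  rewrite e1 e2 -IH; last by lia.
  rewrite -E; congr (_ + _).
  rewrite -(permP (perm_bwt vT z)) -(permP (perm_bwt vT' z)) E //.
apply: (@eq_from_nth _ z) => // i ilt.
case: (ltnP i (size T).-1) => ilt2.
  have e := R (size T - i.+2) ltac:(lia).
  have e3 : size T - (size T - i.+2) = i.+2 by lia.
  rewrite e3 in e.
  have m1 : i.+2 \in iota 1 (size T) by rewrite mem_iota; lia.
  have m2 : i.+2 \in iota 1 (size T') by rewrite mem_iota -sz; lia.
  move: (cb_rank z m1) (cb_rank z m2); rewrite /cb /= => <- <-.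
  by rewrite e E.
have ei : i = (size T).-1 by lia.
have e := R (size T).-1 ltac:(lia).
have e3 : size T - (size T).-1 = 1 by lia.
rewrite e3 in e.
have m1 : 1 \in iota 1 (size T) by rewrite mem_iota; lia.
have m2 : 1 \in iota 1 (size T') by rewrite mem_iota -sz; lia.
move: (cb_rank z m1) (cb_rank z m2); rewrite /cb /= => e1 e2.
rewrite ei {2}sz !nth_last -e1 -e2 e E //.
Qed.

Section Indep.
Variables (disp : Order.disp_t) (Sig : finOrderType disp).
Lemma cmp_indep (x w w' : seq Sig) :
  (forall i, i < size x -> lexlt w (drop i x ++ w)) ->
  (forall i, i < size x -> lexlt w' (drop i x ++ w')) ->
  forall i j, lexlt (drop i x ++ w) (drop j x ++ w) = lexlt (drop i x ++ w') (drop j x ++ w').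
Proof.
move=> Q Q' i j.
have key : forall u1 u2, (exists i, u1 = drop i x) -> (exists j, u2 = drop j x) ->
    lexlt (u1 ++ w) (u2 ++ w) = lexlt (u1 ++ w') (u2 ++ w').
  elim=> [|c u1 IH] [|c2 u2] [i1 e1] [j1 e2].
  - by rewrite !lexlt_irr.
  - have hj : j1 < size x.
      by rewrite ltnNge; apply/negP => H; move: e2; rewrite drop_oversize.
    by rewrite cat0s e2 Q // Q'.
  - have hi : i1 < size x.
      by rewrite ltnNge; apply/negP => H; move: e1; rewrite drop_oversize.
    have h1 := Q i1 hi; have h2 := Q' i1 hi; rewrite -e1 in h1 h2.
    by rewrite !cat0s (lexlt_asym h1) (lexlt_asym h2).
  - have E1 : exists i, u1 = drop i x.
      by exists i1.+1; rewrite -add1n -drop_drop -e1 /= drop0.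
    have E2 : exists i, u2 = drop i x.
      by exists j1.+1; rewrite -add1n -drop_drop -e2 /= drop0.
    by rewrite /= (IH _ E1 E2).
by apply: key; [exists i|exists j].
Qed.
End Indep.

Section Family.
Variables (disp : Order.disp_t) (Sig : finOrderType disp).
Variables (d a b : Sig).
Hypotheses (da : (d < a)%O) (ab : (a < b)%O).

Lemma db : (d < b)%O. Proof. exact: lt_trans da ab. Qed.

Definition blkx (c : bool) : seq Sig := if c then [:: b; a; b; b] else [:: a; b; b; b].
Definition blky (c : bool) : seq Sig := if c then [:: a; b] else [:: a; a].
Definition xs (be : seq bool) := b :: flatten (map blkx be).
Definition ws (ga : seq bool) := flatten (map blky ga) ++ [:: d].

Inductive W : seq Sig -> Prop :=
| W0 : W [:: d]
| W1 w : W w -> W (a :: a :: w)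
| W2 w : W w -> W (a :: b :: w).

Definition SufW u := W u \/ (exists2 w, W w & u = a :: w) \/ (exists2 w, W w & u = b :: w).

Lemma ws_W ga : W (ws ga).
Proof. by elim: ga => [|[] ga IH] /=; [exact: W0|exact: W2|exact: W1]. Qed.

Lemma W_drop w0 i : W w0 -> i < size w0 -> SufW (drop i w0).
Proof.
move=> Ww; elim: Ww i => [|w Ww IH|w Ww IH] [|[|i]] //= hi.
- by left; exact: W0.
- by left; exact: W1.
- by right; left; exists w.
- exact: IH.
- by left; exact: W2.
- by right; right; exists w.
- exact: IH.
Qed.

Lemma W_head w : W w -> (w = [:: d]) \/ exists r, w = a :: r.
Proof. by case=> [|w' _|w' _]; [left|right; eexists|right; eexists]. Qed.

Lemma lt_ab_cases (s : seq Sig) r : (W s \/ exists2 w, W w & s = a :: w) ->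
  lexlt s [:: a, b, b & r].
Proof.
case=> [Ws|[w Ww ->]].
  case: Ws => [|w _|w Ww] /=; rewrite ?da ?eqxx ?ab ?orbT //.
  case: (W_head Ww) => [->|[r' ->]] /=; by rewrite ?eqxx ?(lt_trans da ab) ?ab ?orbT.
case: (W_head Ww) => [->|[r' ->]] /=; by rewrite ?eqxx ?db ?ab ?orbT.
Qed.

Lemma SufW_lt_bb s r : SufW s -> lexlt s [:: b, b & r].
Proof.
case=> [Ws|[[w Ww ->]|[w Ww ->]]] /=.
- case: (W_head Ws) => [->|[r' ->]] /=; by rewrite ?db ?ab.
- by rewrite ab.
- rewrite eqxx lt_irreflexive /=.
  by case: (W_head Ww) => [->|[r' ->]] /=; rewrite ?db ?ab.
Qed.

Lemma SufW_lt_babb s r : SufW s -> lexlt s [:: b, a, b, b & r].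
Proof.
case=> [Ws|[[w Ww ->]|[w Ww ->]]] /=.
- case: (W_head Ws) => [->|[r' ->]] /=; by rewrite ?db ?ab.
- by rewrite ab.
- rewrite eqxx lt_irreflexive /=; apply: lt_ab_cases; by left.
Qed.

Lemma SufW_abb s r : SufW s -> lexlt s [:: a, b, b & r] = (head d s != b).
Proof.
move=> H; have: SufW s := H.
case=> [Ws|[[w Ww ->]|[w Ww ->]]].
- rewrite (lt_ab_cases r (or_introl Ws)).
  by case: (W_head Ws) => [->|[r' ->]] /=; rewrite ?(lt_eqF db) ?(lt_eqF ab).
- rewrite (lt_ab_cases r (or_intror (ex_intro2 _ _ w Ww erefl))).
  by rewrite /= (lt_eqF ab).
- by rewrite /= eqxx /= (lt_gtF ab) (gt_eqF ab).
Qed.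

Definition Xgood (u : seq Sig) :=
  [\/ u = [:: b], exists r, u = [:: b, b & r], exists r, u = [:: b, a, b, b & r]
    | exists r, u = [:: a, b, b & r]].

Lemma flat_good be i : i < size (flatten (map blkx be)) -> Xgood (drop i (flatten (map blkx be))).
Proof.
elim: be i => [|c be IH] i //=.
have tail : forall F, F = flatten (map blkx be) -> Xgood (b :: F).
  move=> F ->; case: be {IH} => [|[] be'] /=.
  - by constructor 1.
  - by constructor 2; eexists.
  - by constructor 3; eexists.
case: c => /=; case: i => [|[|[|[|i]]]] /= hi.
all: try (by constructor 2; eexists).
all: try (by constructor 3; eexists).
all: try (by constructor 4; eexists).
all: try (by apply: tail).
all: apply: IH; lia.
Qed.

Lemma xs_good be i : i < size (xs be) -> Xgood (drop i (xs be)).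
Proof.
case: i => [|i] /= hi; last by apply: flat_good.
case: be {hi} => [|[] be'] /=.
- by constructor 1.
- by constructor 2; eexists.
- by constructor 3; eexists.
Qed.

Lemma size_xs be : size (xs be) = (size be * 4).+1.
Proof. rewrite /xs /=; congr S; elim: be => [|c be IH] //=; rewrite size_cat IH; case: c => /=; lia. Qed.

Lemma size_ws ga : size (ws ga) = (size ga * 2).+1.
Proof. rewrite /ws size_cat addn1; congr S; elim: ga => [|c ga IH] //=; rewrite size_cat IH; case: c => /=; lia. Qed.

Lemma leq_count_in (T : eqType) (a1 a2 : pred T) s :
  {in s, forall x, a1 x -> a2 x} -> count a1 s <= count a2 s.
Proof.
elim: s => //= x s IH H.
rewrite leq_add ?IH //; last by move=> y ys; apply: H; rewrite inE ys orbT.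
case: (a1 x) (H x (mem_head _ _)) => //=; by move=> ->.
Qed.

Lemma Xgood_size1 u : Xgood u -> size u = 1 -> u = [:: b].
Proof. by case=> [->|[r ->]|[r ->]|[r ->]]. Qed.

Lemma Xgood_size2 u : Xgood u -> size u = 2 -> u = [:: b; b].
Proof. by case=> [->|[[|? ?] ->]|[r ->]|[r ->]]. Qed.

Lemma Xgood_head u : Xgood u -> 1 < size u ->
  (exists r, u = [:: a, b, b & r]) \/
  ((head d u != a) /\ forall s t, SufW s -> lexlt s (u ++ t)).
Proof.
case=> [->|[r ->]|[r ->]|[r ->]] //= hs.
- right; split; first by rewrite (gt_eqF ab).
  by move=> s t Hs; apply: SufW_lt_bb.
- right; split; first by rewrite (gt_eqF ab).
  by move=> s t Hs; apply: SufW_lt_babb.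
- by left; exists r.
Qed.

Lemma xs_last1 be : drop (size (xs be)).-1 (xs be) = [:: b].
Proof.
apply: Xgood_size1; first by apply: xs_good; rewrite size_xs.
by rewrite size_drop size_xs; lia.
Qed.

Lemma xs_last2 be : 0 < size be -> drop (size (xs be)).-2 (xs be) = [:: b; b].
Proof.
move=> h; apply: Xgood_size2; first by apply: xs_good; rewrite size_xs; lia.
by rewrite size_drop size_xs; lia.
Qed.

Lemma nth_head (s : seq Sig) i : nth d s i = head d (drop i s).
Proof. by elim: s i => [|x s IH] [|i] //=; rewrite drop0. Qed.

Section OneText.
Variables (be ga : seq bool).
Local Notation x := (xs be).
Local Notation w := (ws ga).
Local Notation T := (x ++ w).
Local Notation A1 := (size x).-1.
Local Notation n := (size T).

Lemma A1_lt_n : A1 < n.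
Proof. by rewrite size_cat size_ws size_xs; lia. Qed.

Lemma drop_T_x i : i < size x -> drop i T = drop i x ++ w.
Proof. by move=> h; rewrite drop_cat h. Qed.

Lemma drop_T_y i : A1 <= i -> drop i T = drop (i - A1) (b :: w).
Proof.
move=> h; have -> : i = (i - A1) + A1 by lia.
rewrite -drop_drop addnK drop_cat ifT; last by rewrite size_xs; lia.
by rewrite xs_last1.
Qed.

Lemma SufW_y i : A1 <= i -> i < n -> SufW (drop i T).
Proof.
move=> h1 h2; rewrite drop_T_y //.
case E: (i - A1) => [|j] /=.
  by right; right; exists w => //; exact: ws_W.
apply: W_drop; first exact: ws_W.
move: h2; rewrite size_cat; lia.
Qed.

Lemma x_good i : i < A1 -> Xgood (drop i x) /\ 1 < size (drop i x).
Proof.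
move=> h; split; first by apply: xs_good; lia.
by rewrite size_drop; lia.
Qed.

Lemma Q_ws i : i < size x -> lexlt w (drop i x ++ w).
Proof.
move=> h; have := xs_good h.
have hw : forall t, lexlt w (b :: t).
  by move=> t; case: (W_head (ws_W ga)) => [->|[r ->]] /=; rewrite ?db ?ab.
case=> [->|[r ->]|[r ->]|[r ->]]; rewrite ?cat_cons ?hw //.
by apply: lt_ab_cases; left; exact: ws_W.
Qed.

Lemma cmp_y_x i0 i : A1 <= i0 -> i0 < n -> i < A1 ->
  lexlt (drop i T) (drop i0 T) = (nth d x i == a) && (head d (drop i0 T) == b).
Proof.
move=> h1 h2 h3.
have S0 := SufW_y h1 h2.
have [G sz] := x_good h3.
rewrite (drop_T_x (i := i)); last by lia.
rewrite nth_head.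
case: (Xgood_head G sz) => [[r ->]|[na Hlt]].
  rewrite /= eqxx /=.
  case E: (head d (drop i0 T) == b).
    move: E; case: (drop i0 T) => [|c s] /=; first by rewrite (lt_eqF db).
    by move/eqP => ->; rewrite ab.
  by have := SufW_abb (r ++ w) S0; rewrite /= E => /lexlt_asym.
rewrite (negbTE na) /=; apply: lexlt_asym.
by apply: (Hlt _ _ S0).
Qed.

Lemma x_ab i : i < size x -> nth d x i = a \/ nth d x i = b.
Proof. by move=> h; rewrite nth_head; case: (xs_good h) => [->|[r ->]|[r ->]|[r ->]]; auto. Qed.

Lemma drop_x_b i : i < size x -> nth d x i != a -> exists t, drop i T = b :: t.
Proof.
move=> h na; rewrite drop_T_x // (drop_nth d) //.
case: (x_ab h) na => -> //; last by eexists.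
by rewrite eqxx.
Qed.

Lemma drop_x_a i : i < size x -> nth d x i = a -> exists t, drop i T = a :: t.
Proof. by move=> h e; rewrite drop_T_x // (drop_nth d) // e; eexists. Qed.

Lemma cmp_xb_y i0 i : i0 < A1 -> nth d x i0 != a -> A1 <= i -> i < n ->
  lexlt (drop i T) (drop i0 T).
Proof.
move=> h1 na h2 h3.
have [G sz] := x_good h1.
rewrite (drop_T_x (i := i0)); last by lia.
case: (Xgood_head G sz) => [[r E]|[_ Hlt]].
  by move: na; rewrite nth_head E eqxx.
by apply: Hlt; apply: SufW_y.
Qed.

Lemma cmp_xb_xa i0 i : i0 < A1 -> nth d x i0 != a -> i < A1 -> nth d x i = a ->
  lexlt (drop i T) (drop i0 T).
Proof.
move=> h1 na h2 e.
have hlt : i0 < size x by lia.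
have [t1 ->] := drop_x_b hlt na.
have [t2 ->] : exists t, drop i T = a :: t by apply: drop_x_a => //; lia.
by rewrite /= ab.
Qed.

Definition Rp i := (A1 <= i) || (nth d x i == a).

Lemma cmp_R_xb i0 i : i0 < n -> Rp i0 -> i < A1 -> nth d x i != a ->
  lexlt (drop i T) (drop i0 T) = false.
Proof.
move=> h0 R0 h na.
case/orP: R0 => [y0|/eqP xa].
  by rewrite cmp_y_x // (negbTE na).
case: (ltnP i0 A1) => h0'; last by rewrite cmp_y_x // (negbTE na).
have hlt : i < size x by lia.
have [t1 ->] := drop_x_b hlt na.
have [t2 ->] : exists t, drop i0 T = a :: t by apply: drop_x_a => //; lia.
by rewrite /= (lt_gtF ab) (gt_eqF ab).
Qed.

Lemma count_blk_a be' : count (pred1 a) (flatten (map blkx be')) = size be'.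
Proof.
elim: be' => //= c be' IH; rewrite count_cat IH.
by case: c => /=; rewrite eqxx (gt_eqF ab) /=.
Qed.

Lemma count_xa : count (fun i => nth d x i == a) (iota 0 A1) = size be.
Proof.
have h : count (fun i => nth d x i == a) (iota 0 (size x)) = size be.
  have -> : count (fun i => nth d x i == a) (iota 0 (size x)) = count (pred1 a) x.
    by rewrite -{3}(mkseq_nth d x) /mkseq count_map.
  by rewrite /= (gt_eqF ab) /= count_blk_a.
have e : size x = (size x).-1.+1 by rewrite size_xs.
rewrite -h [in RHS]e.
have L : nth d x (size x).-1 = b.
  have := xs_last1 be; rewrite (drop_nth d); first by case.
  by rewrite size_xs.
rewrite iota_last count_cat add0n (_ : count _ [:: A1] = 0) ?addn0 //.
by rewrite [LHS]/= L (gt_eqF ab).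
Qed.

Lemma count_Rp : count Rp (iota 0 n) = (n - A1) + size be.
Proof.
have hA := A1_lt_n.
have -> : iota 0 n = iota 0 A1 ++ iota A1 (n - A1).
  by rewrite -iotaD; congr iota; lia.
rewrite count_cat addnC; congr (_ + _).
  rewrite (@eq_in_count _ _ predT); first by rewrite count_predT size_iota.
  by move=> i; rewrite mem_iota /Rp => /andP[-> _].
rewrite -count_xa; apply: eq_in_count => i; rewrite mem_iota /Rp => /andP[_ h].
by rewrite leqNgt h.
Qed.

Definition Kc := (n - A1) + size be.

Lemma rank_R_lt q : q < n -> Rp q -> rank T q.+1 < Kc.
Proof.
move=> qn Rq; rewrite rank_succ /Kc -count_Rp.
set P := fun i => lexlt (drop i T) (drop q T).
have e1 : count (fun i => P i || (i == q)) (iota 0 n) = count P (iota 0 n) + 1.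
  rewrite count_excl; last by move=> i Pi; apply/eqP => eq; move: Pi; rewrite /P eq lexlt_irr.
  by rewrite (count_uniq_mem _ (iota_uniq 0 n)) mem_iota qn.
suff : count (fun i => P i || (i == q)) (iota 0 n) <= count Rp (iota 0 n) by rewrite e1 addn1.
apply: leq_count_in => i; rewrite mem_iota add0n => /andP[_ hi].
case/orP=> [Pi|/eqP -> //].
rewrite /Rp; case: (leqP A1 i) => //= hiA.
apply/negP => na; move: Pi; rewrite /P cmp_R_xb //; exact/negP.
Qed.

Lemma rank_xb_ge q : q < A1 -> nth d x q != a -> Kc <= rank T q.+1.
Proof.
move=> qA na; rewrite rank_succ /Kc -count_Rp.
apply: leq_count_in => i; rewrite mem_iota add0n => /andP[_ hi].
rewrite /Rp; case/orP=> [hy|/eqP xa].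
  by apply: cmp_xb_y.
case: (leqP A1 i) => hiA; first by apply: cmp_xb_y.
by apply: cmp_xb_xa.
Qed.

End OneText.
Lemma rank_y_eq be be' ga q : size be = size be' ->
  (size (xs be)).-1 <= q -> q < size (xs be ++ ws ga) ->
  rank (xs be ++ ws ga) q.+1 = rank (xs be' ++ ws ga) q.+1.
Proof.
move=> sz h1 h2.
have sx : size (xs be) = size (xs be') by rewrite !size_xs sz.
have sT : size (xs be ++ ws ga) = size (xs be' ++ ws ga) by rewrite !size_cat sx.
rewrite !rank_succ -sT.
have hA := A1_lt_n be ga.
set n := size _.
have -> : iota 0 n = iota 0 (size (xs be)).-1 ++ iota (size (xs be)).-1 (n - (size (xs be)).-1).
  by rewrite -iotaD; congr iota; rewrite /n; lia.
have hq : drop q (xs be ++ ws ga) = drop q (xs be' ++ ws ga).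
  by rewrite !drop_T_y // -sx.
rewrite !count_cat; congr (_ + _); last first.
  apply: eq_in_count => i; rewrite mem_iota => /andP[hi _].
  by rewrite hq !drop_T_y // -sx.
have h2' : q < size (xs be' ++ ws ga) by rewrite -sT.
rewrite (@eq_in_count _ _ (fun i => (nth d (xs be) i == a) && (head d (drop q (xs be ++ ws ga)) == b))); last first.
  by move=> i; rewrite mem_iota => /andP[_ hi]; rewrite cmp_y_x.
rewrite [in RHS](@eq_in_count _ _ (fun i => (nth d (xs be') i == a) && (head d (drop q (xs be' ++ ws ga)) == b))); last first.
  by move=> i; rewrite mem_iota => /andP[_ hi]; rewrite cmp_y_x -?sx.
have C : forall (be0 : seq bool) (c : bool),
    count (fun i => (nth d (xs be0) i == a) && c) (iota 0 (size (xs be0)).-1) = c * size be0.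
  move=> be0 [|].
    by rewrite mul1n -(count_xa be0); apply: eq_count => i; rewrite andbT.
  by rewrite mul0n (eq_count (a2 := pred0)) ?count_pred0 // => i; rewrite andbF.
by rewrite -hq C sx C sz.
Qed.

Lemma rank_xb_eq be ga ga' q : size ga = size ga' ->
  q < (size (xs be)).-1 -> nth d (xs be) q != a ->
  rank (xs be ++ ws ga) q.+1 = rank (xs be ++ ws ga') q.+1.
Proof.
move=> sz h1 na.
have sT : size (xs be ++ ws ga) = size (xs be ++ ws ga').
  by rewrite (size_cat (xs be) (ws ga)) (size_cat (xs be) (ws ga')) !size_ws sz.
rewrite !rank_succ -sT; apply: eq_in_count => i; rewrite mem_iota => /andP[_ hi].
case: (ltnP i (size (xs be)).-1) => hiA.
  rewrite !drop_T_x; try lia.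
  apply: cmp_indep => j hj; exact: Q_ws.
by rewrite !cmp_xb_y // -sT.
Qed.

Lemma x_a_prev be i : i < size (xs be) -> nth d (xs be) i = a -> 0 < i /\ nth d (xs be) i.-1 = b.
Proof.
case: i => [|i] hi e; first by move: e => /= /eqP; rewrite (gt_eqF ab).
split => //=.
have := xs_good (_ : i < size (xs be)); rewrite -/(xs be).
move=> /(_ ltac:(lia)); rewrite nth_head.
case=> [->|[r E]|[r E]|[r E]] //=; rewrite ?E //.
move: e; rewrite nth_head -add1n -drop_drop E /= => /eqP; rewrite (gt_eqF ab).
done.
Qed.

Lemma valid_fam be ga : valid_text (xs be ++ ws ga).
Proof.
have hall : all (fun c => (c == a) || (c == b)) (xs be ++ flatten (map blky ga)).
  rewrite all_cat /= eqxx orbT /=; apply/andP; split.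
    by elim: be => //= c be' IH; rewrite all_cat IH andbT; case: c; rewrite /= !eqxx ?orbT.
  by elim: ga => //= c ga' IH; rewrite all_cat IH andbT; case: c; rewrite /= !eqxx ?orbT.
have E : xs be ++ ws ga = rcons (xs be ++ flatten (map blky ga)) d by rewrite /ws catA cats1.
split; first by rewrite size_cat size_xs.
move=> x0 i; rewrite E last_rcons nth_rcons size_rcons /= => hi; rewrite hi.
have := all_nthP x0 hall i hi.
by case/orP => /eqP ->; [exact: da|exact: db].
Qed.

Lemma nth_T_tail be ga z j : 0 < size be -> (size (xs be)).-2 <= j ->
  nth z (xs be ++ ws ga) j = nth z ([:: b; b] ++ ws ga) (j - (size (xs be)).-2).
Proof.
move=> hb hj.
rewrite -(xs_last2 hb) -drop_T_x; last by rewrite size_xs; lia.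
by rewrite nth_drop; congr nth; lia.
Qed.

Lemma Kc_le be ga : Kc be ga <= size (xs be ++ ws ga).
Proof. by rewrite /Kc size_cat size_xs size_ws; lia. Qed.

Lemma S1 be be' ga z r : size be = size be' -> 0 < size be -> r < Kc be ga ->
  nth z (bwt (xs be ++ ws ga)) r = nth z (bwt (xs be' ++ ws ga)) r.
Proof.
move=> sz hb hr.
set T1 := xs be ++ ws ga; set T2 := xs be' ++ ws ga.
have sx : size (xs be) = size (xs be') by rewrite !size_xs sz.
have sT : size T1 = size T2 by rewrite /T1 /T2 !size_cat sx.
have KK : Kc be ga = Kc be' ga by rewrite /Kc -sT sx sz.
have rn : r < size T1 by apply: (leq_trans hr); apply: Kc_le.
have rn2 : r < size T2 by rewrite -sT.
have A4 : 4 <= (size (xs be)).-1 by rewrite size_xs; lia.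
rewrite !nth_bwt //.
set q := nth 0 (suffix_array T1) r.
have qm := nth_sa_mem rn; have rq := rank_nth_sa rn; rewrite -/q in qm rq.
move: qm; rewrite mem_iota => /andP[q1 qn].
have [q' eq'] : exists q', q = q'.+1 by case: (q) q1 => // q'' _; exists q''.
have qn' : q' < size T1 by lia.
case: (leqP (size (xs be)).-1 q') => hy.
- have r2 : rank T2 q = r by rewrite -rq eq' (rank_y_eq sz hy qn').
  have qm2 : q \in iota 1 (size T2) by rewrite mem_iota -sT; lia.
  rewrite -r2 nth_sa_rank // /cb eq'.
  have -> : 1 < q'.+1 by lia.
  rewrite /T1 /T2 !nth_T_tail // -?sx //; lia.
- have xa : nth d (xs be) q' == a.
    apply/negPn/negP => na; have := rank_xb_ge ga hy na; rewrite -eq' rq; lia.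
  have hq'x : q' < size (xs be) by lia.
  have [p1 pb] := x_a_prev hq'x (eqP xa).
  set q2 := nth 0 (suffix_array T2) r.
  have qm2 := nth_sa_mem rn2; have rq2 := rank_nth_sa rn2; rewrite -/q2 in qm2 rq2.
  move: qm2; rewrite mem_iota => /andP[q21 q2n].
  have [q2' eq2'] : exists q', q2 = q'.+1 by case: (q2) q21 => // q'' _; exists q''.
  case: (leqP (size (xs be')).-1 q2') => hy2.
    have : rank T1 q2 = r.
      rewrite -rq2 eq2' (rank_y_eq (esym sz) hy2) //; rewrite -sT; lia.
    rewrite -rq => /rank_inj; rewrite !mem_iota => /(_ ltac:(lia) ltac:(lia)).
    lia.
  have xa2 : nth d (xs be') q2' == a.
    apply/negPn/negP => na; have := rank_xb_ge ga hy2 na; rewrite -eq2' rq2 -KK; lia.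
  have hq2x : q2' < size (xs be') by lia.
  have [p2 pb2] := x_a_prev hq2x (eqP xa2).
  rewrite /cb eq' eq2' /=.
  have -> : 1 < q'.+1 by lia.
  have -> : 1 < q2'.+1 by lia.
  rewrite /T1 /T2 !nth_cat.
  have -> : q'.-1 < size (xs be) by lia.
  have -> : q2'.-1 < size (xs be') by lia.
  rewrite (set_nth_default d z) ?[in RHS](set_nth_default d z) ?pb ?pb2 //; lia.
Qed.

Lemma S2 be ga ga' z r : size ga = size ga' -> Kc be ga <= r ->
  nth z (bwt (xs be ++ ws ga)) r = nth z (bwt (xs be ++ ws ga')) r.
Proof.
move=> sz hr.
set T1 := xs be ++ ws ga; set T2 := xs be ++ ws ga'.
have sT : size T1 = size T2.
  by rewrite /T1 /T2 (size_cat (xs be) (ws ga)) (size_cat (xs be) (ws ga')) !size_ws sz.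
case: (ltnP r (size T1)) => rn; last first.
  by rewrite !nth_default // size_bwt // -sT.
have rn2 : r < size T2 by rewrite -sT.
rewrite !nth_bwt //.
set q := nth 0 (suffix_array T1) r.
have qm := nth_sa_mem rn; have rq := rank_nth_sa rn; rewrite -/q in qm rq.
move: qm; rewrite mem_iota => /andP[q1 qn].
have [q' eq'] : exists q', q = q'.+1 by case: (q) q1 => // q'' _; exists q''.
have qn' : q' < size T1 by lia.
have nR : ~~ Rp be q'.
  apply/negP => R; have := rank_R_lt qn' R; rewrite -eq' rq; lia.
move: nR; rewrite /Rp negb_or -ltnNge => /andP[hx na].
have r2 : rank T2 q = r by rewrite -rq eq' (rank_xb_eq sz hx na).
have qm2 : q \in iota 1 (size T2) by rewrite mem_iota -sT; lia.
rewrite -r2 nth_sa_rank // /cb eq'.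
case: ifP => h.
  rewrite /T1 /T2 !nth_cat; have -> : q'.+1.-2 < size (xs be) by lia. done.
by rewrite /T1 /T2 /ws !catA !last_cat.
Qed.

End Family.


Section Mach.
Variables (Sig : finType) (m : nat) (M : machine Sig m).
Local Notation St := (m.-tuple bool).
Local Notation Al := (disk_alph M).

Lemma scan_cat q (d1 d2 : seq Al) :
  scan q (d1 ++ d2) = ((scan (scan q d1).1 d2).1, (scan q d1).2 ++ (scan (scan q d1).1 d2).2).
Proof.
elim: d1 q => [|x d1 IH] q /=; first by case: (scan q d2).
case: (step q x) => q1 w; rewrite IH.
case: (scan q1 d1) => q2 w2 /=.
by case: (scan q2 d2) => q3 w3 /=; rewrite catA.
Qed.

Definition sufstep (c : St) (D : seq Al) : St * seq Al :=
  ((finish M (scan c D).1).1, (scan c D).2 ++ (finish M (scan c D).1).2).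

Arguments sufstep : simpl never.

Lemma pass_cat s (D1 D2 : seq Al) :
  pass (s, D1 ++ D2) = ((sufstep (scan s D1).1 D2).1, (scan s D1).2 ++ (sufstep (scan s D1).1 D2).2).
Proof.
rewrite /pass /= scan_cat /sufstep /=.
by case: (finish M _) => q w /=; rewrite catA.
Qed.

Fixpoint run (p : nat) (s : St) (D1 D2 : seq Al) : seq (St * St) * (St * seq Al * seq Al) :=
  match p with
  | 0 => ([::], (s, D1, D2))
  | p'.+1 =>
      let c := (scan s D1).1 in
      let s' := (sufstep c D2).1 in
      let r := run p' s' (scan s D1).2 (sufstep c D2).2 in
      ((c, s') :: r.1, r.2)
  end.

Lemma run_iter p s D1 D2 :
  iter p (@pass _ _ M) (s, D1 ++ D2) = ((run p s D1 D2).2.1.1, (run p s D1 D2).2.1.2 ++ (run p s D1 D2).2.2).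
Proof.
elim: p s D1 D2 => [|p IH] s D1 D2; first by [].
by rewrite iterSr pass_cat IH.
Qed.

Lemma run_hybrid p s D1 D2 E1 E2 :
  (run p s D1 D2).1 = (run p s E1 E2).1 ->
  (run p s D1 E2).2.1.2 = (run p s D1 D2).2.1.2 /\ (run p s D1 E2).2.2 = (run p s E1 E2).2.2.
Proof.
elim: p s D1 D2 E1 E2 => [|p IH] s D1 D2 E1 E2 //.
rewrite /= => -[ec es etr].
rewrite ec in es etr *.
rewrite -es in etr *.
exact: IH.
Qed.

Lemma size_run p s D1 D2 : size (run p s D1 D2).1 = p.
Proof. by elim: p s D1 D2 => //= p IH s D1 D2; rewrite IH. Qed.

End Mach.

Lemma pigeon (D R : finType) (f : D -> R) : #|R| < #|D| ->
  exists x y, x != y /\ f x = f y.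
Proof.
move=> hc.
case E: [exists x, exists y, (x != y) && (f x == f y)].
  move/existsP: E => [x /existsP [y /andP [ne /eqP e]]]; by exists x, y.
have inj : injective f.
  move=> x y e; apply/eqP; apply/negPn/negP => ne.
  move/negbT/existsPn: E => /(_ x) /existsPn /(_ y); by rewrite ne e eqxx.
by have := leq_card f inj; rewrite leqNgt hc.
Qed.

Lemma fool_lists (A : Type) (L L1 L2 : seq A) l K :
  size L1 = size L2 -> l <= size L1 -> L = take l L1 ++ drop l L2 ->
  (l <= K -> drop K L = drop K L2) /\ (K <= l -> take K L = take K L1).
Proof.
move=> s12 hl ->; have st : size (take l L1) = l by rewrite size_take_min; lia.
split=> hK.
  rewrite drop_cat st; case: ifP => h; first by lia.
  by rewrite drop_drop; congr drop; lia.
rewrite take_cat st; case: ifP => h.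
  by rewrite -(take_min K l L1); congr take; lia.
have -> : K = l by lia.
by rewrite subnn take0 cats0.
Qed.

Section Fool.
Variables (Sig : finType) (m p : nat) (M : machine Sig m).
Variables (I : finType) (X Y : I -> seq Sig) (O : I -> I -> seq Sig) (nO : nat).
Hypothesis sO : forall i j, size (O i j) = nO.
Hypothesis corr : forall i j,
  (iter p (@pass _ _ M) (init M, map (enc M) (X i) ++ map (enc M) (Y j))).2 = map (enc M) (O i j).
Hypothesis card : #|{: p.-tuple (m.-tuple bool * m.-tuple bool)}| < #|I|.

Lemma fool_machine : exists i1 i2, i1 != i2 /\ exists l, l <= nO /\
  O i1 i2 = take l (O i1 i1) ++ drop l (O i2 i2).
Proof.
pose t0 := nseq_tuple p (init M, init M).
pose f i := insubd t0 (@run _ _ M p (init M) (map (enc M) (X i)) (map (enc M) (Y i))).1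
   : p.-tuple (m.-tuple bool * m.-tuple bool).
have [i1 [i2 [ne e]]] := pigeon f card.
exists i1, i2; split => //.
have etr : (@run _ _ M p (init M) (map (enc M) (X i1)) (map (enc M) (Y i1))).1 =
           (@run _ _ M p (init M) (map (enc M) (X i2)) (map (enc M) (Y i2))).1.
  by move: (congr1 val e); rewrite /f !val_insubd !size_run eqxx.
have [h1 h2] := run_hybrid etr.
have c11 := corr i1 i1; have c22 := corr i2 i2; have c12 := corr i1 i2.
rewrite run_iter /= in c11; rewrite run_iter /= in c22; rewrite run_iter /= in c12.
rewrite h1 h2 in c12.
set P1 := (@run _ _ M p _ (map (enc M) (X i1)) (map (enc M) (Y i1))).2.1.2 in c11 c12.
set Q1 := (@run _ _ M p _ (map (enc M) (X i1)) (map (enc M) (Y i1))).2.2 in c11.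
set P2 := (@run _ _ M p _ (map (enc M) (X i2)) (map (enc M) (Y i2))).2.1.2 in c22.
set Q2 := (@run _ _ M p _ (map (enc M) (X i2)) (map (enc M) (Y i2))).2.2 in c22 c12.
have z1 := congr1 size c11; have z2 := congr1 size c22; have z12 := congr1 size c12.
rewrite !size_cat !size_map !sO in z1 z2 z12.
exists (size P1); split; first by lia.
apply: (@inj_map _ _ (enc M) (@enc_inj _ _ M)).
rewrite -c12 map_cat map_take map_drop -c11 -c22 take_size_cat //.
by rewrite drop_size_cat //; lia.
Qed.
End Fool.

Lemma three_elems (disp : Order.disp_t) (Sig : finOrderType disp) :
  3 <= #|Sig| -> exists d a b : Sig, (d < a)%O /\ (a < b)%O.
Proof.
move=> h.
set s := sort <=%O (enum Sig).
have ss : size s = #|Sig| by rewrite size_sort cardE.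
have srt : sorted <%O s by rewrite sort_lt_sorted enum_uniq.
have [x0 _] : exists x : Sig, True.
  by move: h; rewrite cardE; case: (enum Sig) => [|x ?] //; exists x.
have hn := sorted_ltn_nth lt_trans x0 srt.
exists (nth x0 s 0), (nth x0 s 1), (nth x0 s 2); split; apply: hn; rewrite ?inE ?ss //; lia.
Qed.

Lemma flatten_inj (A : eqType) (f : bool -> seq A) k0 :
  (forall c, size (f c) = k0) -> injective f ->
  forall be be', size be = size be' -> flatten (map f be) = flatten (map f be') -> be = be'.
Proof.
move=> sf fi; elim=> [|c be IH] [|c' be'] //= [sz] e.
have e1 : f c = f c' by have := congr1 (take k0) e; rewrite !take_size_cat.
have e2 : flatten (map f be) = flatten (map f be').
  by have := congr1 (drop k0) e; rewrite !drop_size_cat.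
by rewrite (fi _ _ e1) (IH _ sz e2).
Qed.

Section Main.
Variables (disp : Order.disp_t) (Sig : finOrderType disp).
Variables (d a b : Sig).
Hypotheses (da : (d < a)%O) (ab : (a < b)%O).

Lemma xs_inj be be' : size be = size be' -> xs a b be = xs a b be' -> be = be'.
Proof.
move=> sz [e]; apply: (flatten_inj (k0 := 4) _ _ sz e); first by case.
move=> [] [] //= [] /eqP; by rewrite ?(gt_eqF ab) ?(lt_eqF ab).
Qed.

Lemma ws_inj ga ga' : size ga = size ga' -> ws d a b ga = ws d a b ga' -> ga = ga'.
Proof.
move=> sz; rewrite /ws !cats1 => /rcons_inj [e].
apply: (flatten_inj (k0 := 2) _ _ sz e); first by case.
move=> [] [] //= [] /eqP; by rewrite ?(gt_eqF ab) ?(lt_eqF ab).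
Qed.

Lemma Kc_val k be ga : size be = k -> size ga = k -> Kc d a b be ga = k * 3 + 2.
Proof. by move=> h1 h2; rewrite /Kc size_cat (size_xs da ab) (size_ws da ab) h1 h2; lia. Qed.

Lemma size_T be ga : size (xs a b be ++ ws d a b ga) = (size be * 4).+1 + (size ga * 2).+1.
Proof. by rewrite size_cat (size_xs da ab) (size_ws da ab). Qed.

Lemma S1take k be be' ga : size be = k -> size be' = k -> size ga = k -> 0 < k ->
  take (k * 3 + 2) (bwt (xs a b be ++ ws d a b ga)) = take (k * 3 + 2) (bwt (xs a b be' ++ ws d a b ga)).
Proof.
move=> h1 h2 h3 k0.
apply: (@eq_from_nth _ d).
  by rewrite !size_take !size_bwt !size_T h1 h2 h3.
move=> i; rewrite size_take size_bwt size_T h1 h3 => hi.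
have hi' : i < k * 3 + 2 by move: hi; rewrite ifT //; lia.
rewrite !nth_take // (S1 da ab (be' := be') d) //; first by rewrite h1 h2.
  by rewrite h1.
by rewrite (Kc_val h1 h3).
Qed.

Lemma S2drop k be ga ga' : size be = k -> size ga = k -> size ga' = k ->
  drop (k * 3 + 2) (bwt (xs a b be ++ ws d a b ga)) = drop (k * 3 + 2) (bwt (xs a b be ++ ws d a b ga')).
Proof.
move=> h1 h2 h3.
apply: (@eq_from_nth _ d).
  by rewrite !size_drop !size_bwt !size_T h2 h3.
move=> i _; rewrite !nth_drop (S2 da ab (ga' := ga') d) //; first by rewrite h2 h3.
by rewrite (Kc_val h1 h2); lia.
Qed.

End Main.

Theorem theorem7 (disp : Order.disp_t) (Sig : finOrderType disp) :
  3 <= #|Sig| ->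
  forall m p : nat -> nat,
  little_o_n (fun n => m n * p n) ->
  (forall M : forall n, machine Sig (m n),
     forall N, exists n, N <= n /\
       exists T : seq Sig, valid_text T /\ size T = n /\
         ~ outputs (M n) (p n) T (bwt T))
  /\
  (forall M : forall n, machine Sig (m n),
     forall N, exists n, N <= n /\
       exists T : seq Sig, valid_text T /\ size T = n /\
         ~ outputs (M n) (p n) (bwt T) T).
Proof.
move=> h3 m p hmp.
have [d [a [b [da ab]]]] := three_elems h3.
have [N0 HN0] := hmp 13 isT.
pose k := N0 + 5.
have main : forall N, let k := N + N0 + 5 in let n := (k * 4).+1 + (k * 2).+1 in
   N <= n /\ #|{: (p n).-tuple ((m n).-tuple bool * (m n).-tuple bool)}| < #|{: k.-tuple bool}|.
  move=> N k' n; split; first by rewrite /n /k'; lia.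
  have hmpk : 13 * (m n * p n) <= n by apply: HN0; rewrite /n /k'; lia.
  rewrite !card_tuple card_prod !card_tuple card_bool -expnD -expnM ltn_exp2l // mulnDl.
  move: hmpk; rewrite /n /k'; lia.
have szT : forall k0 (i j : k0.-tuple bool), size (xs a b i ++ ws d a b j) = (k0 * 4).+1 + (k0 * 2).+1.
  by move=> k0 i j; rewrite size_T // !size_tuple.
have sxs : forall k0 (i : k0.-tuple bool), size (xs a b i) = (k0 * 4).+1.
  by move=> k0 i; rewrite (size_xs da ab) size_tuple.
split => M N; have [hN card] := main N; move: hN card.
- set k1 := N + N0 + 5; set n := (k1 * 4).+1 + (k1 * 2).+1 => hN card.
  exists n; split => //.
  case E: [exists bg : k1.-tuple bool * k1.-tuple bool,
    disk_after (M n) (p n) (xs a b bg.1 ++ ws d a b bg.2) !=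
      map (enc (M n)) (bwt (xs a b bg.1 ++ ws d a b bg.2))].
    move/existsP: E => [[be ga] /= /eqP ne].
    exists (xs a b be ++ ws d a b ga); split; first exact: valid_fam.
    by split; [rewrite szT|].
  exfalso; move/negbT/existsPn: E => Hall.
  have corr : forall i j : k1.-tuple bool,
    (iter (p n) (@pass _ _ (M n)) (init (M n), map (enc (M n)) (xs a b i) ++ map (enc (M n)) (ws d a b j))).2
      = map (enc (M n)) (bwt (xs a b i ++ ws d a b j)).
    by move=> i j; have := Hall (i, j); rewrite negbK /disk_after map_cat => /eqP.
  have sO : forall i j : k1.-tuple bool, size (bwt (xs a b i ++ ws d a b j)) = n.
    by move=> i j; rewrite size_bwt szT.
  have [i1 [i2 [ne [l [hl eO]]]]] := fool_machine sO corr card.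
  have hl' : l <= size (bwt (xs a b i1 ++ ws d a b i1)) by rewrite sO.
  have [f1 f2] := @fool_lists _ _ _ _ l (k1 * 3 + 2) (etrans (sO i1 i1) (esym (sO i2 i2))) hl' eO.
  have sz1 := size_tuple i1; have sz2 := size_tuple i2.
  case: (leqP l (k1 * 3 + 2)) => hlK.
    have e : bwt (xs a b i1 ++ ws d a b i2) = bwt (xs a b i2 ++ ws d a b i2).
      rewrite -(cat_take_drop (k1 * 3 + 2) (bwt (xs a b i1 ++ _))) f1 //.
      by rewrite (S1take da ab (be' := i2)) ?cat_take_drop //; lia.
    have := bwt_inj (valid_fam da ab _ _) (valid_fam da ab _ _) e.
    move/(congr1 (take (k1 * 4).+1)); rewrite !take_size_cat ?sxs // => /(xs_inj ab).
    by move=> /(_ (etrans sz1 (esym sz2))) /val_inj /eqP; rewrite (negbTE ne).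
  have e : bwt (xs a b i1 ++ ws d a b i2) = bwt (xs a b i1 ++ ws d a b i1).
    rewrite -(cat_take_drop (k1 * 3 + 2) (bwt (xs a b i1 ++ _))) f2; last by lia.
    by rewrite (S2drop da ab (ga' := i1)) ?cat_take_drop.
  have := bwt_inj (valid_fam da ab _ _) (valid_fam da ab _ _) e.
  move/(congr1 (drop (k1 * 4).+1)); rewrite !drop_size_cat ?sxs // => /(ws_inj ab).
  by move=> /(_ (etrans sz2 (esym sz1))) /val_inj /eqP; rewrite eq_sym (negbTE ne).
- set k1 := N + N0 + 5; set n := (k1 * 4).+1 + (k1 * 2).+1 => hN card.
  exists n; split => //.
  case E: [exists bg : k1.-tuple bool * k1.-tuple bool,
    disk_after (M n) (p n) (bwt (xs a b bg.1 ++ ws d a b bg.2)) !=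
      map (enc (M n)) (xs a b bg.1 ++ ws d a b bg.2)].
    move/existsP: E => [[be ga] /= /eqP ne].
    exists (xs a b be ++ ws d a b ga); split; first exact: valid_fam.
    by split; [rewrite szT|].
  exfalso; move/negbT/existsPn: E => Hall.
  pose K := k1 * 3 + 2.
  have split_ok : forall i j : k1.-tuple bool,
      take K (bwt (xs a b i ++ ws d a b i)) ++ drop K (bwt (xs a b j ++ ws d a b j))
      = bwt (xs a b j ++ ws d a b i).
    move=> i j; rewrite (S1take da ab (be' := j)) ?size_tuple //.
    rewrite (S2drop da ab (ga' := i)) ?size_tuple // cat_take_drop //.
    rewrite /k1; lia.
  have corr : forall i j : k1.-tuple bool,
    (iter (p n) (@pass _ _ (M n)) (init (M n),
       map (enc (M n)) (take K (bwt (xs a b i ++ ws d a b i))) ++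
       map (enc (M n)) (drop K (bwt (xs a b j ++ ws d a b j))))).2
      = map (enc (M n)) (xs a b j ++ ws d a b i).
    move=> i j; have := Hall (j, i); rewrite negbK /disk_after -map_cat split_ok => /eqP //.
  have sO : forall i j : k1.-tuple bool, size (xs a b j ++ ws d a b i) = n.
    by move=> i j; rewrite szT.
  have [i1 [i2 [ne [l [hl eO]]]]] := fool_machine sO corr card.
  have hl' : l <= size (xs a b i1 ++ ws d a b i1) by rewrite sO.
  have [f1 f2] := @fool_lists _ _ _ _ l (k1 * 4).+1 (etrans (sO i1 i1) (esym (sO i2 i2))) hl' eO.
  have sz1 := size_tuple i1; have sz2 := size_tuple i2.
  case: (leqP l (k1 * 4).+1) => hlK.
    move: (f1 hlK); rewrite !drop_size_cat ?sxs // => /(ws_inj ab).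
    by move=> /(_ (etrans sz1 (esym sz2))) /val_inj /eqP; rewrite (negbTE ne).
  move: (f2 (ltnW hlK)); rewrite !take_size_cat ?sxs // => /(xs_inj ab).
  by move=> /(_ (etrans sz2 (esym sz1))) /val_inj /eqP; rewrite eq_sym (negbTE ne).
Qed.
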